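(* Let $t$ be a positive integer, let $M$ be a $t$-spike of order $r$ with associated partition $(A_1,\ldots,A_r)$, and let $C$ be a circuit of $M$. Then either (1) $C = \bigcup_{j \in J}A_j$ for some $t$-element set $J \subseteq \{1,\dots,r\}$, or (2) $\left|\{i \in \{1,\dots,r\} : A_i \cap C \neq \emptyset\}\right| \ge r-(t-2)$ and $\left|\{i \in \{1,\dots,r\} : A_i \subseteq C\}\right| < t$.
   Context: For a positive integer $t$, a matroid $M$ is a $t$-spike of order $r$ (where $r\ge t$) if there is a partition $(A_1,\ldots,A_r)$ of $E(M)$ into 2-element sets, called the associated partition, such that, for every $t$-element subset $J\subseteq\{1,\dots,r\}$, the set $\bigcup_{j\in J}A_j$ is both a circuit and a cocircuit of $M$. *)

(* Defs.v *)
From mathcomp Require Import all_boot.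
Unset Printing Implicit Defensive.

Definition is_matroid (T : finType) (I : {set T} -> bool) : Prop :=
  [/\ I set0,
      (forall X Y : {set T}, Y \subset X -> I X -> I Y) &
      (forall X Y : {set T}, I X -> I Y -> #|X| < #|Y| ->
         exists2 y, y \in Y :\: X & I (y |: X))].

Definition is_basis (T : finType) (I : {set T} -> bool) (B : {set T}) : bool :=
  maxset I B.

Definition is_circuit (T : finType) (I : {set T} -> bool) (C : {set T}) : bool :=
  minset (fun X => ~~ I X) C.

(* cocircuits: circuits of the dual matroid, i.e. minimal sets meeting every basis *)
Definition is_cocircuit (T : finType) (I : {set T} -> bool) (D : {set T}) : bool :=
  minset (fun X => [forall B : {set T}, is_basis T I B ==> (X :&: B != set0)]) D.

Definition is_spike (T : finType) (I : {set T} -> bool) (t r : nat)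
    (A : 'I_r -> {set T}) : Prop :=
  [/\ 0 < t /\ t <= r,
      (forall i, #|A i| = 2),
      (forall i j, i != j -> [disjoint A i & A j]),
      \bigcup_(i < r) A i = [set: T] &
      (forall J : {set 'I_r}, #|J| = t ->
         is_circuit T I (\bigcup_(j in J) A j) /\ is_cocircuit T I (\bigcup_(j in J) A j))].

(* Main.v *)
Require Import Defs.
From mathcomp Require Import all_boot.
From Stdlib Require Import Lia.
From mathcomp Require Import zify.

Section S.
Variables (T : finType) (I : {set T} -> bool).
Hypothesis HM : is_matroid T I.

Lemma ind_sub (X Y : {set T}) : Y \subset X -> I X -> I Y.
Proof. by case: HM => _ H _; apply: H. Qed.

Lemma aug (X Y : {set T}) : I X -> I Y -> #|X| < #|Y| -> exists2 y, y \in Y :\: X & I (y |: X).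
Proof. by case: HM => _ _ H; apply: H. Qed.

Lemma basis_le (B B' : {set T}) : is_basis T I B -> is_basis T I B' -> #|B| <= #|B'|.
Proof.
move=> hB hB'; rewrite leqNgt; apply/negP => lt.
have [y] := aug _ _ (maxsetp hB') (maxsetp hB) lt.
rewrite inE => /andP [yB' _] Iy.
have := maxsetsup hB' Iy (subsetUr _ _).
move=> e; move: yB'; rewrite -e in_setU1 eqxx //.
Qed.

Lemma ortho (C D : {set T}) e : is_circuit T I C -> is_cocircuit T I D -> C :&: D = [set e] -> False.
Proof.
move=> hC hD hCD.
have eC : e \in C by have := set11 e; rewrite -hCD inE => /andP [].
have eD : e \in D by have := set11 e; rewrite -hCD inE => /andP [].
have ICe : I (C :\ e).
  apply/negPn/negP => nI.
  have := minsetinf hC nI (subD1set _ _).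
  by move/setP/(_ e); rewrite eC setD11.
have CeD : (C :\ e) :&: D == set0.
  apply/eqP/setP => x; rewrite !inE.
  case xC: (x \in C); case xD: (x \in D); rewrite ?andbF ?andbT //=.
  have : x \in C :&: D by rewrite inE xC xD.
  by rewrite hCD inE => ->.
have [B0 hB0 B0D] : exists2 B0, is_basis T I B0 & (D :\ e) :&: B0 == set0.
  have nD : ~~ [forall B : {set T}, is_basis T I B ==> ((D :\ e) :&: B != set0)].
    apply/negP => H.
    have := minsetinf hD H (subD1set _ _).
    by move/setP/(_ e); rewrite eD setD11.
  move/forallPn: nD => [B]; rewrite negb_imply negbK => /andP [h1 h2].
  by exists B.
have [B1 hB1 CB1] := maxset_exists (P := fun X => I X && (X :&: D == set0)) (introT andP (conj ICe CeD)).
have /andP [IB1 B1D] := maxsetp hB1.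
have lt : #|B1| < #|B0|.
  rewrite ltnNge; apply/negP => le.
  have [B2 hB2 B12] := maxset_exists (P := I) IB1.
  have e12 : B1 == B2.
    rewrite eqEcard B12 /=.
    apply: leq_trans le; exact: basis_le.
  move/forallP: (minsetp hD) => /(_ B2); rewrite /is_basis hB2 /= -(eqP e12) setIC.
  by rewrite (eqP B1D) eqxx.
have [y] := aug _ _ IB1 (maxsetp hB0) lt.
rewrite inE => /andP [yB1 yB0] Iy.
case yD: (y \in D).
- have ye : y = e.
    apply/eqP; apply/negPn/negP => ne.
    have : y \in (D :\ e) :&: B0 by rewrite !inE ne yD yB0.
    by rewrite (eqP B0D) inE.
  subst y.
  have : I C.
    apply: (ind_sub _ _ _ Iy); apply/subsetP => x xC.
    rewrite in_setU1; case: eqP => //= ne.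
    by apply: (subsetP CB1); rewrite !inE xC andbT; apply/eqP.
  by rewrite (negbTE (minsetp hC)).
- have P1 : I (y |: B1) && ((y |: B1) :&: D == set0).
    rewrite Iy /=; apply/eqP/setP => x; rewrite !inE.
    case: eqP => [->|_] /=; first by rewrite yD.
    have := (eqP B1D); move/setP/(_ x); rewrite !inE => ->; done.
  have := maxsetsup hB1 P1 (subsetUr _ _).
  by move=> h; move: yB1; rewrite -h in_setU1 eqxx.
Qed.

End S.

Lemma pick_sub (U : finType) (K : {set U}) n : n <= #|K| -> exists J : {set U}, J \subset K /\ #|J| = n.
Proof.
elim: n => [|n IH] h; first by exists set0; rewrite sub0set cards0.
have [J [JK cJ]] := IH (ltnW h).
have : J \proper K by rewrite properEcard JK cJ.
case/properP => _ [x xK xJ].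
exists (x |: J); split; first by rewrite subUset sub1set xK.
by rewrite cardsU1 xJ cJ.
Qed.
Theorem lemma6p3 (T : finType) (I : {set T} -> bool) (t r : nat)
    (A : 'I_r -> {set T}) (C : {set T}) :
  0 < t -> is_matroid T I -> is_spike T I t r A -> is_circuit T I C ->
  (exists J : {set 'I_r}, #|J| = t /\ C = \bigcup_(j in J) A j) \/
  (* |{i : A_i meets C}| >= r - (t - 2), written over nat without truncation *)
  (r + 2 <= #|[set i | A i :&: C != set0]| + t /\
   #|[set i | A i \subset C]| < t).
Proof.
move=> t0 HM [[_ tr] Hc _ Hcov Hsp] hC.
set K := [set i | A i \subset C]; set Mm := [set i | A i :&: C != set0].
case: (leqP t #|K|) => hK.
  left; have [J [JK cJ]] := pick_sub _ _ _ hK.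
  exists J; split => //; have [hU _] := Hsp J cJ.
  symmetry; apply: (minsetinf hC (minsetp hU)).
  apply/bigcupsP => j jJ; have := subsetP JK j jJ; by rewrite inE.
right; split => //; rewrite leqNgt; apply/negP => hlt.
case: (boolP (Mm \subset K)) => hMK.
  have hZ : t - #|K| <= #|~: K|.
    by have := cardsC K; rewrite card_ord; lia.
  have [Z [ZK cZ]] := pick_sub _ _ _ hZ.
  have KZ : K :&: Z = set0.
    apply/setP => x; rewrite !inE; apply/negbTE/negP => /andP [xK xZ].
    by have := subsetP ZK x xZ; rewrite !inE xK.
  have cJ : #|K :|: Z| = t by rewrite cardsU KZ cards0 cZ; lia.
  have [hU _] := Hsp _ cJ.
  have CU : C \subset \bigcup_(j in K :|: Z) A j.
    apply/subsetP => x xC.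
    have : x \in \bigcup_(i < r) A i by rewrite Hcov inE.
    case/bigcupP => i _ xi; apply/bigcupP; exists i => //.
    rewrite inE; apply/orP; left; apply: (subsetP hMK).
    by rewrite inE; apply/set0Pn; exists x; rewrite inE xi xC.
  have eCU := minsetinf hU (minsetp hC) CU.
  have : 0 < #|Z| by rewrite cZ; lia.
  case/card_gt0P => z zZ.
  have : z \in K.
    rewrite inE eCU; apply/subsetP => x xz; apply/bigcupP; exists z => //.
    by rewrite inE zZ orbT.
  by have := subsetP ZK z zZ; rewrite inE => /negbTE ->.
case/subsetPn: hMK => p pM pK.
have hZ : t.-1 <= #|~: Mm| by have := cardsC Mm; rewrite card_ord; lia.
have [Z [ZM cZ]] := pick_sub _ _ _ hZ.
have pZ : p \notin Z by apply/negP => xZ; have := subsetP ZM p xZ; rewrite inE pM.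
have cJ : #|p |: Z| = t by rewrite cardsU1 pZ cZ; lia.
have [_ hD] := Hsp _ cJ.
have c1 : #|A p :&: C| = 1.
  have := cardsID C (A p); rewrite Hc.
  have : 0 < #|A p :&: C| by rewrite card_gt0; move: pM; rewrite inE.
  have : 0 < #|A p :\: C| by rewrite card_gt0 setD_eq0; move: pK; rewrite inE.
  lia.
have /cards1P [e he] : #|A p :&: C| == 1 by rewrite c1.
apply: (@ortho _ _ HM _ _ e hC hD).
apply/setP => x; rewrite in_set1 in_setI.
apply/idP/idP.
  case/andP => xC /bigcupP [j]; rewrite in_setU1 => /orP [/eqP -> | jZ] xj.
    have : x \in A p :&: C by rewrite inE xj xC.
    by rewrite he inE.
  have := subsetP ZM j jZ; rewrite !inE negbK => /eqP/setP/(_ x).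
  by rewrite !inE xj xC.
move=> /eqP ->.
have : e \in A p :&: C by rewrite he inE.
rewrite inE => /andP [ep eC]; rewrite eC /=.
by apply/bigcupP; exists p => //; rewrite setU11.
Qed.
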